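(* Let $A,B\in M_n(\mathbb{R}_+)$ be triangularizable projector matrices (i.e. $A^2=A$ and $B^2=B$). If the max commutator $C=[A,B]_\oplus = AB\oplus BA$ is nilpotent, then $A$ and $B$ are simultaneously triangularizable.
   Context: Max algebra: $\mathbb{R}_+$ the nonnegative reals with $a\oplus b=\max\{a,b\}$ and ordinary multiplication; for $A,B\in M_n(\mathbb{R}_+)$, $(AB)_{ij}=\max_k a_{ik}b_{kj}$ and $(A\oplus B)_{ij}=\max\{a_{ij},b_{ij}\}$; all powers and products are in this sense. A matrix is nilpotent if some power is $0$. $GL_n(\mathbb{R}_+)$ is the set of matrices invertible under this product (the generalized permutation matrices). $A$ is triangularizable if $P^{-1}AP$ is upper triangular for some $P\in GL_n(\mathbb{R}_+)$; $A,B$ are simultaneously triangularizable if one $P\in GL_n(\mathbb{R}_+)$ makes both $P^{-1}AP$ and $P^{-1}BP$ upper triangular. *)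

(* Defs.v *)
From mathcomp Require Import all_boot all_order all_algebra.
From mathcomp Require Import reals.
Set Implicit Arguments. Unset Strict Implicit. Unset Printing Implicit Defensive.
Import Order.TTheory GRing.Theory Num.Theory.
Local Open Scope ring_scope.

Section MaxAlgebra.
Variables (R : realType) (n : nat).

Definition nonneg_mx (A : 'M[R]_n) : Prop := forall i j, 0 <= A i j.

(* max-algebra product: (AB)_ij = max_k a_ik b_kj (entries are nonnegative,
   so 0 is a neutral start for the max) *)
Definition maxmul (A B : 'M[R]_n) : 'M[R]_n :=
  \matrix_(i, j) \big[Num.max/0]_(k < n) (A i k * B k j).

Definition maxadd (A B : 'M[R]_n) : 'M[R]_n :=
  \matrix_(i, j) Num.max (A i j) (B i j).

Definition maxid : 'M[R]_n := 1%:M.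

Fixpoint maxpow (A : 'M[R]_n) (k : nat) : 'M[R]_n :=
  match k with
  | O => maxid
  | S k' => maxmul A (maxpow A k')
  end.

Definition max_nilpotent (A : 'M[R]_n) : Prop := exists k, maxpow A k = 0.

Definition maxcomm (A B : 'M[R]_n) : 'M[R]_n := maxadd (maxmul A B) (maxmul B A).

Definition max_inverse (P Q : 'M[R]_n) : Prop :=
  nonneg_mx P /\ nonneg_mx Q /\ maxmul P Q = maxid /\ maxmul Q P = maxid.

Definition upper_triangular (M : 'M[R]_n) : Prop :=
  forall i j : 'I_n, (j < i)%N -> M i j = 0.

Definition max_triangularizable (A : 'M[R]_n) : Prop :=
  exists P Q, max_inverse P Q /\ upper_triangular (maxmul (maxmul Q A) P).

Definition max_sim_triangularizable (A B : 'M[R]_n) : Prop :=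
  exists P Q, max_inverse P Q /\
    upper_triangular (maxmul (maxmul Q A) P) /\
    upper_triangular (maxmul (maxmul Q B) P).

End MaxAlgebra.

(* Main.v *)
Require Import Defs.
From mathcomp Require Import all_boot all_order all_algebra.
From mathcomp Require Import reals zify.
Import Order.TTheory GRing.Theory Num.Theory.
Local Open Scope ring_scope.

Section BigMax.
Variable (R : realType) (n : nat).

Lemma bmax_ge0 (F : 'I_n -> R) : 0 <= \big[Num.max/0]_(k < n) F k.
Proof. by apply: (big_rec (fun z => 0 <= z)) => // i x _ hx; rewrite le_max hx orbT. Qed.

Lemma bmax_ge (F : 'I_n -> R) k : F k <= \big[Num.max/0]_(k < n) F k.
Proof. by rewrite (bigD1 k) //= le_max lexx. Qed.

Lemma bmax_le (F : 'I_n -> R) c : 0 <= c -> (forall k, F k <= c) ->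
  \big[Num.max/0]_(k < n) F k <= c.
Proof. by move=> h0 hF; apply: (big_ind (fun z => z <= c)) => // x y hx hy; rewrite ge_max hx. Qed.

Lemma bmax_wit (F : 'I_n -> R) : \big[Num.max/0]_(k < n) F k = 0 \/
  exists k, \big[Num.max/0]_(k < n) F k = F k.
Proof.
apply: (big_ind (fun z => z = 0 \/ exists k, z = F k)); first by left.
  move=> x y hx hy; rewrite /Num.max; by case: ifP.
by move=> i _; right; exists i.
Qed.

Lemma maxmulE (A B : 'M[R]_n) i j :
  maxmul A B i j = \big[Num.max/0]_(k < n) (A i k * B k j).
Proof. by rewrite /maxmul mxE. Qed.

Lemma maxmul_ge (A B : 'M[R]_n) i k j : A i k * B k j <= maxmul A B i j.
Proof. by rewrite maxmulE; apply: (bmax_ge (fun k => A i k * B k j)). Qed.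

Lemma maxmul_ge0 (A B : 'M[R]_n) i j : 0 <= maxmul A B i j.
Proof. by rewrite maxmulE; apply: bmax_ge0. Qed.

End BigMax.
Arguments bmax_ge0 {R n}.
Arguments bmax_ge {R n}.
Arguments bmax_le {R n}.
Arguments bmax_wit {R n}.
Arguments maxmulE {R n}.
Arguments maxmul_ge {R n}.
Arguments maxmul_ge0 {R n}.


Section Walk.
Variables (T : finType) (t t' c : rel T).
Hypotheses (tT : forall u v w, t u v -> t v w -> t u w)
  (tT' : forall u v w, t' u v -> t' v w -> t' u w)
  (mix : forall u v w, t u v -> t' v w -> c u w)
  (anti : forall u v, t u v -> t v u -> u = v)
  (acyc : forall u v, c u v -> connect c v u -> False).

Lemma walk_false x y p : t x y -> x != y ->
  path [rel u v | t u v || t' u v] y p -> last y p = x -> False.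
Proof.
move=> txy nxy.
pose Inv z := (z = y \/ t y z) \/ (exists q, t x q /\ t' q z) \/
  (exists s1 s2 p, [/\ t x s1, t' s1 s2, connect c s2 p &
      (t p z \/ exists q, t p q /\ t' q z)]).
have H : forall p, path [rel u v | t u v || t' u v] y p -> Inv (last y p).
  elim/last_ind => [|s w IH]; first by move=> _; rewrite /Inv; left; left.
  rewrite rcons_path last_rcons => /andP[/IH hI /= /orP hE].
  rewrite /Inv in hI *; set z := last y s in hI hE *.
  case: hI => [[zy|tyz]|[[q [h1 h2]]|[s1 [s2 [p0 [h1 h2 h3 h4]]]]]].
  - case: hE => h.
      by left; right; rewrite -zy.
    by right; left; exists z; split => //; rewrite zy.
  - case: hE => h.
      by left; right; exact: tT tyz h.
    by right; left; exists z; split => //; exact: tT txy tyz.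
  - case: hE => h.
      right; right; exists q, z, z; split => //; by left.
    by right; left; exists q; split => //; exact: tT' h2 h.
  - case: h4 => [h4|[q [hq1 hq2]]]; case: hE => h.
    + by right; right; exists s1, s2, p0; split => //; left; exact: tT h4 h.
    + by right; right; exists s1, s2, p0; split => //; right; exists z.
    + right; right; exists s1, s2, z; split => //; last by left.
      apply: connect_trans h3 _; apply: connect1; exact: mix hq1 hq2.
    + right; right; exists s1, s2, p0; split => //; right; exists q; split => //.
      exact: tT' hq2 h.
move=> hp hl; have := H p hp; rewrite /Inv hl.
case=> [[xy|tyx]|[[q [h1 h2]]|[s1 [s2 [p0 [h1 h2 h3 h4]]]]]].
- by move: nxy; rewrite xy eqxx.
- by move: nxy; rewrite (anti _ _ txy tyx) eqxx.
- by apply: (acyc _ _ (mix _ _ _ h1 h2)); exact: connect0.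
- case: h4 => [h4|[q [hq1 hq2]]].
    by apply: (acyc _ _ (mix _ _ _ (tT _ _ _ h4 h1) h2)).
  apply: (acyc _ _ (mix _ _ _ h1 h2)); apply: connect_trans h3 _.
  apply: connect1; exact: mix hq1 hq2.
Qed.

End Walk.

Section Main.
Variables (R : realType) (n : nat).
Implicit Types (A B C M P Q : 'M[R]_n).

Lemma pos_of M u v : nonneg_mx M -> M u v != 0 -> 0 < M u v.
Proof. by move=> nM h; rewrite lt0r h nM. Qed.

Lemma pos_trans A u v w : nonneg_mx A -> maxmul A A = A ->
  A u v != 0 -> A v w != 0 -> A u w != 0.
Proof.
move=> nA AA h1 h2; have := maxmul_ge A A u v w; rewrite AA => hle.
rewrite lt0r_neq0 //; apply: lt_le_trans hle; apply: mulr_gt0; exact: pos_of.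
Qed.

Lemma maxcomm_ge0 A B : nonneg_mx (maxcomm A B).
Proof. by move=> i j; rewrite /maxcomm /maxadd mxE le_max maxmul_ge0. Qed.

Lemma mixAB A B u v w : nonneg_mx A -> nonneg_mx B ->
  A u v != 0 -> B v w != 0 -> maxcomm A B u w != 0.
Proof.
move=> nA nB h1 h2; rewrite lt0r_neq0 // /maxcomm /maxadd mxE lt_max.
apply/orP; left; apply: lt_le_trans (maxmul_ge A B u v w).
apply: mulr_gt0; exact: pos_of.
Qed.

Lemma mixBA A B u v w : nonneg_mx A -> nonneg_mx B ->
  B u v != 0 -> A v w != 0 -> maxcomm A B u w != 0.
Proof.
move=> nA nB h1 h2; rewrite lt0r_neq0 // /maxcomm /maxadd mxE lt_max.
apply/orP; right; apply: lt_le_trans (maxmul_ge B A u v w).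
apply: mulr_gt0; exact: pos_of.
Qed.

Lemma tri_anti A u v : nonneg_mx A -> max_triangularizable A ->
  A u v != 0 -> A v u != 0 -> u = v.
Proof.
move=> nA [P [Q [[nP [nQ [PQ QP]]] UT]]] huv hvu.
have wit : forall x, exists k, 0 < P x k /\ 0 < Q k x.
  move=> x; have := bmax_wit (fun k => P x k * Q k x).
  rewrite -maxmulE PQ /maxid mxE eqxx mulr1n.
  case=> [E|[k hk]]; first by move/eqP: E; rewrite oner_eq0.
  exists k.
  have : P x k * Q k x != 0 by rewrite -hk oner_neq0.
  rewrite mulf_eq0 negb_or => /andP[h1 h2]; split; exact: pos_of.
have key : forall x y k l, 0 < Q k x -> A x y != 0 -> 0 < P y l -> (k <= l)%N.
  move=> x y k l hQ hA hP; rewrite leqNgt; apply/negP => lt.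
  have := UT k l lt => E.
  have h1 := maxmul_ge (maxmul Q A) P k y l; have h2 := maxmul_ge Q A k x y.
  have : 0 < maxmul Q A k y * P y l.
    apply: mulr_gt0 => //; apply: lt_le_trans h2; apply: mulr_gt0 => //.
    exact: pos_of.
  by rewrite ltNge (le_trans h1) // E.
have [ku [Pu Qu]] := wit u; have [kv [Pv Qv]] := wit v.
have ekv : ku = kv by apply: ord_inj; apply/anti_leq; rewrite (key u v) // (key v u).
case: (eqVneq u v) => // nuv.
have := maxmul_ge P Q u ku v; rewrite PQ /maxid mxE (negbTE nuv) mulr0n.
by rewrite {2}ekv leNgt mulr_gt0.
Qed.

Lemma nil_acyc C : nonneg_mx C -> max_nilpotent C -> forall u v,
  C u v != 0 -> connect [rel a b | C a b != 0] v u -> False.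
Proof.
move=> nC [K hK]; set c := [rel a b | C a b != 0].
have succ : forall v w, c v w -> connect c w v -> exists w1, c w w1 && connect c w1 w.
  move=> v w cvw /connectP [p hp hl].
  have : path c w (rcons p w) by rewrite rcons_path hp -hl.
  have : last w (rcons p w) = w by rewrite last_rcons.
  case E: (rcons p w) => [|w1 q]; first by have := size_rcons p w; rewrite E.
  move=> /= hl2 /andP[c1 pq]; exists w1; rewrite c1 /=.
  by apply/connectP; exists q.
have ind : forall L v w, c v w -> connect c w v -> exists y, 0 < maxpow C L v y.
  elim => [|L IH] v w cvw cwv.
    by exists v; rewrite /= /maxid mxE eqxx mulr1n ltr01.
  have [w1 /andP[c1 c2]] := succ v w cvw cwv.
  have [y hy] := IH w w1 c1 c2; exists y => /=.
  apply: lt_le_trans (maxmul_ge C (maxpow C L) v w y).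
  by apply: mulr_gt0 => //; apply: pos_of.
move=> u v cuv cvu; have [y] := ind K u v cuv cvu.
by rewrite hK mxE ltxx.
Qed.

Theorem theorem3p12 (A B : 'M[R]_n) :
  nonneg_mx A -> nonneg_mx B ->
  max_triangularizable A -> max_triangularizable B ->
  maxmul A A = A -> maxmul B B = B ->
  max_nilpotent (maxcomm A B) ->
  max_sim_triangularizable A B.
Proof.
move=> nA nB tA tB AA BB nilC.
set Rl := [rel u v | (A u v != 0) || (B u v != 0)].
have acyc := nil_acyc (maxcomm A B) (maxcomm_ge0 A B) nilC.
have acycR : forall x y, Rl x y -> connect Rl y x -> x = y.
  move=> x y Rxy; case: (eqVneq x y) => // nxy /connectP [p hp hl]; exfalso.
  move/orP: Rxy => [hA|hB].
    apply: (@walk_false _ [rel u v | A u v != 0] [rel u v | B u v != 0]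
       [rel u v | maxcomm A B u v != 0] _ _ _ _ _ x y p hA nxy hp (esym hl)).
    - by move=> u v w; apply: pos_trans.
    - by move=> u v w; apply: pos_trans.
    - by move=> u v w; apply: mixAB.
    - by move=> u v; apply: tri_anti.
    - exact: acyc.
  have hp' : path [rel u v | (B u v != 0) || (A u v != 0)] y p.
    by move: hp; apply: sub_path => u v /= /orP[]->; rewrite ?orbT.
  apply: (@walk_false _ [rel u v | B u v != 0] [rel u v | A u v != 0]
     [rel u v | maxcomm A B u v != 0] _ _ _ _ _ x y p hB nxy hp' (esym hl)).
  - by move=> u v w; apply: pos_trans.
  - by move=> u v w; apply: pos_trans.
  - by move=> u v w; apply: mixBA.
  - by move=> u v; apply: tri_anti.
  - exact: acyc.
pose h x := #|[set u | connect Rl u x]|.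
have hlt : forall x y, Rl x y -> x != y -> (h x < h y)%N.
  move=> x y Rxy nxy; apply: proper_card; apply/properP; split.
    apply/subsetP => u; rewrite !inE => hu; apply: (connect_trans hu); exact: connect1.
  exists y; first by rewrite inE connect0.
  rewrite inE; apply/negP => hyx; by move: nxy; rewrite (acycR x y Rxy hyx) eqxx.
pose g (x : 'I_n) := (h x * n + x)%N.
have f0lt : forall x, (#|[set u | (g u < g x)%N]| < n)%N.
  move=> x; apply: (@leq_trans #|[set: 'I_n]|); last by rewrite cardsT card_ord.
  apply: proper_card; apply/properP; split.
    exact: subsetT.
  by exists x; rewrite ?inE // ltnn.
pose f x : 'I_n := Ordinal (f0lt x).
have fmono : forall x y, (g x < g y)%N -> (f x < f y)%N.
  move=> x y lt; apply: proper_card; apply/properP; split.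
    apply/subsetP => u; rewrite !inE => hu; exact: ltn_trans hu lt.
  by exists x; rewrite !inE ?ltnn.
have ginj : forall x y, g x = g y -> x = y.
  move=> x y E; apply: ord_inj; have := congr1 (modn^~ n) E.
  by rewrite /g !modnMDl !modn_small.
have finj : injective f.
  move=> x y E; case: (ltngtP (g x) (g y)) => hg.
  - by have := fmono _ _ hg; rewrite E ltnn.
  - by have := fmono _ _ hg; rewrite E ltnn.
  - exact: ginj.
have fR : forall x y, Rl x y -> (f x <= f y)%N.
  move=> x y Rxy; case: (eqVneq x y) => [->//|nxy]; apply: ltnW; apply: fmono.
  have := hlt x y Rxy nxy; have := ltn_ord x; rewrite /g; nia.
have [f' fK f'K] := injF_bij finj.
have UT : forall M, nonneg_mx M -> (forall x y, M x y != 0 -> (f x <= f y)%N) ->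
  upper_triangular (maxmul (maxmul (\matrix_(i, j) ((i == f j)%:R : R)) M)
                           (\matrix_(i, j) ((f i == j)%:R : R))).
  move=> M nM fM i j lt; rewrite maxmulE.
  apply/le_anti/andP; split; last exact: bmax_ge0.
  apply: bmax_le => // y; rewrite mxE.
  have [hy|hy] := eqVneq (f y) j; last by rewrite mulr0.
  rewrite mulr1 maxmulE; apply: bmax_le => // x; rewrite mxE.
  have [hx|hx] := eqVneq i (f x); last by rewrite mul0r.
  rewrite mul1r; have [->//|nz] := eqVneq (M x y) 0.
  by have := fM _ _ nz; rewrite -hx hy leqNgt lt.
exists (\matrix_(i, j) ((f i == j)%:R : R)), (\matrix_(i, j) ((i == f j)%:R : R)).
split; last split.
- split; first by move=> i j; rewrite mxE ler0n.
  split; first by move=> i j; rewrite mxE ler0n.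
  split; apply/matrixP => i j; rewrite maxmulE /maxid !mxE.
  + case: (eqVneq i j) => [<-|nij].
      rewrite mulr1n; apply/le_anti/andP; split.
        by apply: bmax_le => // k; rewrite !mxE; do 2 case: (_ == _); rewrite ?mulr1 ?mulr0.
      apply: le_trans (bmax_ge _ (f i)); by rewrite !mxE !eqxx mulr1.
    rewrite mulr0n; apply/le_anti/andP; split; last exact: bmax_ge0.
    apply: bmax_le => // k; rewrite !mxE.
    have [<-|_] := eqVneq (f i) k; last by rewrite mul0r.
    by rewrite (inj_eq finj) (negbTE nij) mulr0.
  + case: (eqVneq i j) => [<-|nij].
      rewrite mulr1n; apply/le_anti/andP; split.
        by apply: bmax_le => // k; rewrite !mxE; do 2 case: (_ == _); rewrite ?mulr1 ?mulr0.
      apply: le_trans (bmax_ge _ (f' i)); by rewrite !mxE f'K !eqxx mulr1.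
    rewrite mulr0n; apply/le_anti/andP; split; last exact: bmax_ge0.
    apply: bmax_le => // k; rewrite !mxE.
    have [E|_] := eqVneq i (f k); last by rewrite mul0r.
    by rewrite -E (negbTE nij) mulr0.
- by apply: UT => // x y hxy; apply: fR; rewrite /= hxy.
- by apply: UT => // x y hxy; apply: fR; rewrite /= hxy orbT.
Qed.

End Main.
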